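(* Let $G$ be a finite simple graph. If $x$ is a maximum cost construction sequence for $G$ (i.e. $\nu(x)=\nu^*(G)$), then $x$ is easy.
   Context: For a finite simple graph $G=(V,E)$ with $\ell=|V|+|E|$, a construction sequence (c-sequence) is a bijection $x:\{1,\dots,\ell\}\to V\sqcup E$ such that every edge $e=uw$ satisfies $x^{-1}(e)>\max\{x^{-1}(u),x^{-1}(w)\}$. The cost of $x$ is $\nu(x)=\sum_{e=uw\in E}\big(2x^{-1}(e)-x^{-1}(u)-x^{-1}(w)\big)$, and $\nu^*(G)$ is the maximum of $\nu(x)$ over all c-sequences for $G$. A c-sequence is easy if no edge precedes a vertex. *)

(* Defs.v *)
From HB Require Import structures.
From mathcomp Require Import all_boot all_order all_algebra.
Set Implicit Arguments. Unset Strict Implicit. Unset Printing Implicit Defensive.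
Import GRing.Theory Num.Theory.

Section CSeq.
Variables (T : finType) (g : rel T).

Definition simple_graph := symmetric g /\ irreflexive g.

Definition is_edge (A : {set T}) : bool :=
  [exists u, exists w, g u w && (A == [set u; w])].

Definition edge := {A : {set T} | is_edge A}.

Definition item := (T + edge)%type.

Definition ell := #|{: item}|.

(* a sequence x : {1..ell} -> V ⊔ E, indexed here by 'I_ell (index i stands
   for position i+1) *)
Definition seqT := 'I_ell -> item.

(* position x^{-1}(a) in {1,...,ell} (1-based), for bijective x *)
Definition pos (x : seqT) (a : item) : nat :=
  (find (fun i : 'I_ell => x i == a) (enum 'I_ell)).+1.

Definition cseq (x : seqT) : Prop :=
  bijective x /\
  forall (e : edge) (v : T), v \in val e -> pos x (inl v) < pos x (inr e).

Definition cost (x : seqT) : int :=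
  \sum_(e : edge)
     ((2 * pos x (inr e))%:Z - \sum_(v in val e) (pos x (inl v))%:Z)%R.

Definition max_cost (x : seqT) : Prop :=
  cseq x /\ forall y : seqT, cseq y -> (cost y <= cost x)%R.

Definition easy (x : seqT) : Prop :=
  forall (v : T) (e : edge), pos x (inl v) < pos x (inr e).

End CSeq.

(* Main.v *)
Require Import Defs.
From mathcomp Require Import all_boot all_order all_algebra.
From mathcomp Require Import zify fingroup perm.
Import GRing.Theory Num.Theory.

Section Aux.
Variables (T : finType) (g : rel T).

Lemma pos_inj (x : seqT g) k : injective x -> pos x (x k) = k.+1.
Proof.
move=> xi; rewrite /pos.
have -> : find (fun j : 'I_(ell g) => x j == x k) (enum 'I_(ell g))
   = find (pred1 k) (enum 'I_(ell g)).
  by apply: eq_find => j /=; rewrite (inj_eq xi).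
by rewrite -/(index k _) index_enum_ord.
Qed.

Lemma cost_lt (x y : seqT g) e0 :
  (forall e, pos x (inr e) <= pos y (inr e)) ->
  pos x (inr e0) < pos y (inr e0) ->
  (forall v, pos y (inl v) <= pos x (inl v)) ->
  (cost x < cost y)%R.
Proof.
move=> He He0 Hv; rewrite /cost (bigD1 e0) //= [X in (_ < X)%R](bigD1 e0) //=.
apply: ltr_leD.
  apply: ltr_leB; first by rewrite ltz_nat ltn_pmul2l.
  by apply: ler_sum => v _; rewrite lez_nat.
apply: ler_sum => e _; apply: lerB; first by rewrite lez_nat leq_mul2l He orbT.
by apply: ler_sum => v _; rewrite lez_nat.
Qed.

Lemma step_nat (P : nat -> bool) a b : P a -> ~~ P b -> a <= b ->
  exists i, [/\ a <= i, i < b, P i & ~~ P i.+1].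
Proof.
move=> Pa; elim: b => [|b IH] nPb ab.
  by move: ab; rewrite leqn0 => /eqP E; subst a; rewrite Pa in nPb.
case: (boolP (P b)) => Pb.
  exists b; split=> //.
  rewrite leq_eqVlt in ab; case/orP: ab => [/eqP E|]; last by [].
  by subst a; rewrite Pa in nPb.
have ab' : a <= b.
  rewrite leq_eqVlt in ab; case/orP: ab => [/eqP E|]; last by [].
  by subst a; rewrite Pa in nPb.
by have [i [h1 h2 h3 h4]] := IH Pb ab'; exists i; split=> //; apply: ltnW.
Qed.

End Aux.

Theorem lemma2 (T : finType) (g : rel T) (x : seqT g) :
  simple_graph g -> max_cost x -> easy x.
Proof.
move=> _ [[bx Hx] Hmax] v e.
have [xi xK xiK] := bx.
have xinj : injective x := bij_inj bx.
have posE a : pos x a = (xi a).+1 by rewrite -{1}(xiK a) pos_inj.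
rewrite ltnNge; apply/negP => Hle.
pose isE (a : item g) := if a is inr _ then true else false.
pose P k := [exists j : 'I_(ell g), (val j == k) && isE (x j)].
have Pa : P (xi (inr e)) by apply/existsP; exists (xi (inr e)); rewrite eqxx xiK.
have nPb : ~~ P (xi (inl v)).
  apply/existsP => -[j /andP [/eqP jE]].
  have -> : j = xi (inl v) by apply: val_inj.
  by rewrite xiK.
have ab : xi (inr e) <= xi (inl v).
  by rewrite !posE ltnS in Hle.
have [i [_ ib Pi nPi1]] := @step_nat P _ _ Pa nPb ab.
have i1lt : i.+1 < ell g by apply: leq_ltn_trans ib (ltn_ord _).
have ilt : i < ell g by apply: ltnW.
pose I0 : 'I_(ell g) := Ordinal ilt.
pose I1 : 'I_(ell g) := Ordinal i1lt.
have xI0 : isE (x I0).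
  case/existsP: Pi => j /andP [/eqP jE].
  by have -> : j = I0 by apply: val_inj.
have xI1 : ~~ isE (x I1).
  apply: contra nPi1 => H; apply/existsP; exists I1; by rewrite eqxx.
case E0 : (x I0) xI0 => [//|e0] _.
pose t := tperm I0 I1.
pose y : seqT g := fun k => x (t k).
have by_ : bijective y.
  apply: (bij_comp bx); exists t; [exact: tpermK | exact: tpermK].
have yinj : injective y := bij_inj by_.
have posyE a : pos y a = (t (xi a)).+1.
  have H := @pos_inj _ _ y (t (xi a)) yinj.
  by rewrite -H /y tpermK xiK.
have tv k : ~~ isE (x k) -> t k <= k.
  move=> Hk; rewrite /t; case: tpermP => [Ek|Ek|_ _].
  - by rewrite Ek E0 in Hk.
  - by rewrite Ek /= leqnSn.
  - by [].
have te k : isE (x k) -> k <= t k.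
  move=> Hk; rewrite /t; case: tpermP => [Ek|Ek|_ _].
  - by rewrite Ek /= leqnSn.
  - by rewrite Ek in Hk; rewrite Hk in xI1.
  - by [].
have Hev : forall e', pos x (inr e') <= pos y (inr e').
  by move=> e'; rewrite posE posyE ltnS te // xiK.
have Hvv : forall v', pos y (inl v') <= pos x (inl v').
  by move=> v'; rewrite posE posyE ltnS tv // xiK.
have cy : cseq y.
  split=> // e' v' vin.
  apply: leq_ltn_trans (Hvv v') _; apply: leq_trans (Hev e').
  exact: Hx.
have Hlt : pos x (inr e0) < pos y (inr e0).
  by rewrite posE posyE ltnS -E0 xK /t tpermL.
have := Hmax y cy; rewrite Order.TotalTheory.leNgt.
by rewrite (@cost_lt _ _ x y e0 Hev Hlt Hvv).
Qed.
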